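(* Let $S$ be a numerical semigroup with set of nonzero Apéry elements $X$, depth $q$, $\rho=qm-c$, and $D=S^*+S^*$. Let $$X_0=\{z\in X\cap D \mid \exists\, x,y\in X,\ z=x+y,\ \delta(x)+\delta(y)=\delta(z)+q-1\}.$$ Then $|X_0|\le\rho$.
   Context: A numerical semigroup is a subset $S\subseteq\mathbb N$ containing $0$, closed under addition, with finite complement; $S^*=S\setminus\{0\}$, $m=\min S^*$, $c=\max(\mathbb Z\setminus S)+1$, $q=\lceil c/m\rceil$, $\rho=qm-c\in[0,m)$. $X=\{s\in S^*: s-m\notin S\}$. For $x\in S$, $\delta(x)$ is the unique integer such that $x+\delta(x)m\in[c,c+m-1]$. *)

(* Defs.v *)
From mathcomp Require Import all_boot all_order all_algebra.
Import Order.TTheory GRing.Theory Num.Theory.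

Definition numerical_semigroup (S : pred nat) : Prop :=
  [/\ 0 \in S,
      (forall a b, a \in S -> b \in S -> a + b \in S)
    & exists N, forall n, N <= n -> n \in S].

Definition is_multiplicity (S : pred nat) (m : nat) : Prop :=
  [/\ m \in S, 0 < m & forall s, s \in S -> 0 < s -> m <= s].

(* c = max (Z \ S) + 1, i.e. the least integer c such that every integer >= c
   lies in S (c >= 0 always, since negative integers are not in S). *)
Definition is_conductor (S : pred nat) (c : nat) : Prop :=
  (forall n, c <= n -> n \in S) /\
  (forall k, (forall n, k <= n -> n \in S) -> c <= k).

(* q = ceil(c/m) (for m > 0) *)
Definition depth (m c : nat) : nat := (c + m.-1) %/ m.

Definition rho (m c : nat) : nat := depth m c * m - c.

(* X = { s in S^* : s - m \notin S } (s - m taken in Z) *)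
Definition apery_nz (S : pred nat) (m s : nat) : bool :=
  [&& s \in S, 0 < s & ~~ ((m <= s) && (s - m \in S))].

Definition in_D (S : pred nat) (z : nat) : Prop :=
  exists a b, [/\ a \in S, 0 < a, b \in S, 0 < b & z = a + b].

Definition is_delta (S : pred nat) (m c : nat) (delta : nat -> int) : Prop :=
  forall x, x \in S ->
    (c%:Z <= x%:Z + delta x * m%:Z <= c%:Z + m%:Z - 1)%R.

Definition X0 (S : pred nat) (m c : nat) (delta : nat -> int) (z : nat) : Prop :=
  [/\ apery_nz S m z, in_D S z &
      exists x y, [/\ apery_nz S m x, apery_nz S m y, z = x + y &
        (delta x + delta y = delta z + (depth m c)%:Z - 1)%R]].

(* Main.v *)
Require Import Defs.
From mathcomp Require Import all_boot all_order all_algebra.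
From mathcomp Require Import zify.
Import Order.TTheory GRing.Theory Num.Theory.

Lemma addmul_in (S : pred nat) m : numerical_semigroup S -> m \in S ->
  forall k x, x \in S -> x + k * m \in S.
Proof.
move=> [_ hadd _] hm; elim=> [|k IH] x hx; first by rewrite mul0n addn0.
have -> : x + k.+1 * m = (x + k * m) + m by rewrite mulSn; lia.
by apply: hadd => //; apply: IH.
Qed.

Lemma apery_step (S : pred nat) m z1 z2 k : numerical_semigroup S -> m \in S ->
  apery_nz S m z1 -> apery_nz S m z2 -> z2 = z1 + k * m -> k = 0.
Proof.
move=> hS hm /and3P[h1 _ _] /and3P[_ _ h2] e; case: k e => // k e.
exfalso; move: h2; rewrite e.
have -> : z1 + k.+1 * m - m = z1 + k * m by rewrite mulSn; lia.
rewrite (@addmul_in S m hS hm k z1 h1) andbT => /negP; apply; lia.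
Qed.

Lemma ap_in (S : pred nat) m z : apery_nz S m z -> z \in S.
Proof. by case/and3P. Qed.

Theorem proposition3p20 (S : pred nat) (m c : nat) (delta : nat -> int) :
  numerical_semigroup S -> is_multiplicity S m -> is_conductor S c ->
  is_delta S m c delta ->
  forall s : seq nat, uniq s -> (forall z, z \in s -> X0 S m c delta z) ->
  size s <= rho m c.
Proof.
move=> hS [hm m0 _] _ hd s us hs.
have hq : c <= depth m c * m.
  rewrite /depth.
  have := divn_eq (c + m.-1) m; have := ltn_pmod (c + m.-1) m0; lia.
pose R z : int := (z%:Z + delta z * m%:Z - c%:Z)%R.
have bnd : forall z, z \in s ->
  (m%:Z - (rho m c)%:Z <= R z /\ R z <= m%:Z - 1)%R.
  move=> z /hs [az _ [x [y [ax ay ez ed]]]].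
  have := hd z (@ap_in S m _ az); have := hd x (@ap_in S m _ ax);
  have := hd y (@ap_in S m _ ay).
  have e2 : ((delta x + delta y) * m%:Z = (delta z + (depth m c)%:Z - 1) * m%:Z)%R
    by rewrite ed.
  move: e2; rewrite /R /rho ez !mulrDl.
  move: hq; set q := depth m c => hq.
  have -> : Posz (q * m - c) = (Posz q * Posz m - Posz c)%R by lia.
  lia.
pose g z := `|(R z - m%:Z + (rho m c)%:Z)%R|%N.
have gb : forall z, z \in s -> g z < rho m c.
  move=> z /bnd; rewrite /g; lia.
have ginj : {in s &, injective g}.
  move=> z1 z2 h1 h2; rewrite /g => e.
  have := bnd _ h1; have := bnd _ h2 => b2 b1.
  have eR : R z1 = R z2 by lia.
  move: eR; rewrite /R => eR.
  have ap1 : apery_nz S m z1 by case: (hs _ h1).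
  have ap2 : apery_nz S m z2 by case: (hs _ h2).
  clear e b1 b2 h1 h2.
  wlog le12 : z1 z2 ap1 ap2 eR / z1 <= z2.
    move=> W; case: (leqP z1 z2) => h; first exact: W.
    by symmetry; apply: W => //; try lia.
  have eq1 : ((z2 - z1)%:Z = (delta z1 - delta z2) * m%:Z)%R.
    rewrite mulrBl; lia.
  case E : (delta z1 - delta z2)%R eq1 => [k|k] eq1.
  - have ek : z2 = z1 + k * m by lia.
    have k0 := @apery_step S m z1 z2 k hS hm ap1 ap2 ek.
    lia.
  - exfalso; move: eq1; rewrite NegzE; lia.
rewrite -(size_map g) -(size_iota 0 (rho m c)).
apply: uniq_leq_size; first by rewrite map_inj_in_uniq.
move=> _ /mapP [z hz ->]; rewrite mem_iota /=; exact: gb.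
Qed.
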